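(* Suppose $G_{\text{hon}}$ is connected. For each $l\in[n]$ let $\bar\tau(l)=\inf\{j\in\mathbb N:|\bar{\mathcal I}_j|=l\}$. Then for all $l,j\in\mathbb N$ with $l\le n$, $$\mathbb P(\bar\tau(l)>lj)\le l\,(1-\Upsilon/\bar d_{\text{hon}})^j.$$
   Context: $G=([n+m],E)$ undirected, honest agents $[n]$; for $i\in[n]$, $N_{\text{hon}}(i)$ its honest neighbors, $d_{\text{hon}}(i)=|N_{\text{hon}}(i)|$, $d(i)$ its total degree, $\bar d_{\text{hon}}=\max_{i\in[n]}d_{\text{hon}}(i)$; $G_{\text{hon}}$ the honest subgraph; $\Upsilon=\min_{i\in[n]}d_{\text{hon}}(i)/d(i)$; $i^\star\in[n]$ fixed. Noisy rumor process: independent $\bar Y_j^{(i)}\sim$Bernoulli$(\Upsilon)$, $\bar H_j^{(i)}\sim$Uniform$(N_{\text{hon}}(i))$; $\bar{\mathcal I}_0=\{i^\star\}$, $\bar{\mathcal I}_j=\bar{\mathcal I}_{j-1}\cup\{i\notin\bar{\mathcal I}_{j-1}:\bar Y_j^{(i)}=1,\bar H_j^{(i)}\in\bar{\mathcal I}_{j-1}\}$ for $j\ge1$. (Convention: $\bar\tau(1)=1$, i.e. the infimum is over $j\ge1$.) *)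

(* Defs.v *)
From HB Require Import structures.
From mathcomp Require Import all_boot all_order all_algebra.
Set Implicit Arguments. Unset Strict Implicit. Unset Printing Implicit Defensive.
Import Order.TTheory GRing.Theory Num.Theory.
Local Open Scope ring_scope.

Section Rumor.
Variables (n m : nat).
(* Graph G on vertices [n+m] given by an edge relation; honest agents are the
   first n vertices, embedded via lshift m. *)
Variable e : rel 'I_(n + m).

Definition hon (i : 'I_n) : 'I_(n + m) := lshift m i.

Definition Nhon (i : 'I_n) : {set 'I_n} := [set j : 'I_n | e (hon i) (hon j)].
Definition dhon (i : 'I_n) : nat := #|Nhon i|.
Definition deg (i : 'I_n) : nat := #|[set v : 'I_(n + m) | e (hon i) v]|.
Definition dhon_max : nat := \max_(i < n) dhon i.
Definition ehon : rel 'I_n := fun i j => e (hon i) (hon j).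
Definition hon_connected : Prop := forall i j : 'I_n, connect ehon i j.

Variable R : realFieldType.
(* Upsilon = min_i dhon(i)/d(i); each ratio is <= 1, so folding min from 1 is
   the minimum over the (nonempty, since i* exists) set of honest agents. *)
Definition Upsilon : R := \big[Num.min/1]_(i < n) ((dhon i)%:R / (deg i)%:R).

(* The randomness of round j>=1 for agent i is the pair (Y_j^(i), H_j^(i)).
   A sample over horizon T: round k+1 <-> index k : 'I_T. *)
Definition Omega (T : nat) := {ffun 'I_T -> {ffun 'I_n -> bool * 'I_n}}.

Definition pr1 (i : 'I_n) (x : bool * 'I_n) : R :=
  (if x.1 then Upsilon else 1 - Upsilon) *
  (if x.2 \in Nhon i then ((dhon i)%:R)^-1 else 0).

Definition weight (T : nat) (w : Omega T) : R :=
  \prod_(k : 'I_T) \prod_(i : 'I_n) pr1 i (w k i).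

Definition Prob (T : nat) (P : pred (Omega T)) : R := \sum_(w : Omega T | P w) weight w.

Definition roundvar (T : nat) (w : Omega T) (j : nat) (i : 'I_n) : bool * 'I_n :=
  match j with
  | 0 => (false, i)
  | j'.+1 => if insub j' is Some k then w k i else (false, i)
  end.

Fixpoint infected (istar : 'I_n) (T : nat) (w : Omega T) (j : nat) : {set 'I_n} :=
  match j with
  | 0 => [set istar]
  | j'.+1 =>
      let S := infected istar w j' in
      S :|: [set i | (i \notin S) && (roundvar w j i).1 && ((roundvar w j i).2 \in S)]
  end.

(* event { \bar tau(l) > t } where \bar tau(l) = inf{ j >= 1 : |\bar I_j| >= l }
   (inf of the empty set = +oo): no round j in 1..t has |I_j| >= l. *)
Definition tau_gt (istar : 'I_n) (T : nat) (l t : nat) : pred (Omega T) :=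
  fun w => [forall k : 'I_t.+1, (0 < val k)%N ==> (#|infected istar w k| < l)%N].

End Rumor.

(* Main.v *)
Require Import Defs.
From mathcomp Require Import all_boot all_order all_algebra.
Set Implicit Arguments. Unset Strict Implicit. Unset Printing Implicit Defensive.
Import Order.TTheory GRing.Theory Num.Theory.
Local Open Scope ring_scope.

Section Proof.
Variables (R : realFieldType) (n m : nat) (e : rel 'I_(n + m)).

Local Notation C := {ffun 'I_n -> bool * 'I_n}.
Local Notation Ups := (Upsilon e R).

Lemma Ups_ge0 : 0 <= Ups.
Proof.
rewrite /Upsilon; elim/big_ind: _ => //.
  by move=> x y hx hy; rewrite le_min hx hy.
by move=> i _; rewrite divr_ge0 ?ler0n.
Qed.

Lemma Ups_le1 : Ups <= 1.
Proof.
rewrite /Upsilon; elim/big_rec: _ => // i x _ hx.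
by rewrite ge_min hx orbT.
Qed.

Lemma pr1_ge0 i x : 0 <= pr1 e R i x.
Proof.
rewrite /pr1; apply: mulr_ge0.
  by case: x.1; rewrite ?Ups_ge0 ?subr_ge0 ?Ups_le1.
by case: ifP => _; rewrite ?invr_ge0 ?ler0n.
Qed.

Lemma sum_pr1_le1 i : \sum_x pr1 e R i x <= 1.
Proof.
have -> : \sum_x pr1 e R i x = \sum_(b : bool) \sum_(y : 'I_n) pr1 e R i (b, y).
  by rewrite pair_big /=; apply: eq_big => // -[b y].
rewrite big_bool /= /pr1 /= -!big_distrr /= -mulrDl addrC subrK mul1r.
rewrite -big_mkcond /= sumr_const /dhon.
case: (posnP #|Nhon e i|) => [->|hp]; first by rewrite mulr0n ler01.
by rewrite -[X in X <= _]mulr_natr mulVf // pnatr_eq0 -lt0n.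
Qed.

Lemma sum_pr1_ge0 i : 0 <= \sum_x pr1 e R i x.
Proof. by apply: sumr_ge0 => x _; apply: pr1_ge0. Qed.

Definition mu (c : C) : R := \prod_i pr1 e R i (c i).

Lemma mu_ge0 c : 0 <= mu c.
Proof. by apply: prodr_ge0 => i _; apply: pr1_ge0. Qed.

Lemma weight_ge0 T (w : Omega n T) : 0 <= weight e R w.
Proof. by apply: prodr_ge0 => k _; apply: mu_ge0. Qed.

Lemma sum_mu_le1 : \sum_c mu c <= 1.
Proof.
rewrite /mu -(bigA_distr_bigA (fun i x => pr1 e R i x)) /=.
by apply: prodr_ile1 => i _; rewrite sum_pr1_ge0 sum_pr1_le1.
Qed.

Definition EE T (F : Omega n T -> R) : R := \sum_w weight e R w * F w.

Lemma mass_le1 T : \sum_(w : Omega n T) weight e R w <= 1.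
Proof.
rewrite /weight -(bigA_distr_bigA (fun k c => mu c)) /=.
apply: prodr_ile1 => k _; rewrite sum_mu_le1 andbT.
by apply: sumr_ge0 => c _; apply: mu_ge0.
Qed.

Lemma EE_le T (F G : Omega n T -> R) : (forall w, F w <= G w) -> EE F <= EE G.
Proof. by move=> h; apply: ler_sum => w _; by rewrite ler_wpM2l ?weight_ge0. Qed.

Lemma EE_const T c : EE (fun _ : Omega n T => c) = (\sum_(w : Omega n T) weight e R w) * c.
Proof. by rewrite /EE mulr_suml. Qed.

Lemma EE_le_c T (F : Omega n T -> R) c : 0 <= c -> (forall w, F w <= c) -> EE F <= c.
Proof.
move=> c0 h; apply: le_trans (EE_le h) _; rewrite EE_const.
by apply: ler_piMl => //; apply: mass_le1.
Qed.

Lemma EE_add T (F : Omega n T -> R) c :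
  EE (fun w => F w + c) = EE F + (\sum_(w : Omega n T) weight e R w) * c.
Proof. by rewrite /EE mulr_suml -big_split /=; apply: eq_bigr => w _; rewrite mulrDr. Qed.


Definition join a b (w1 : Omega n a) (w2 : Omega n b) : Omega n (a + b) :=
  [ffun k => match split k with inl x => w1 x | inr y => w2 y end].

Lemma split_l a b (x : 'I_a) : split (lshift b x) = inl x.
Proof. exact: (unsplitK (inl _ x)). Qed.
Lemma split_r a b (y : 'I_b) : split (rshift a y) = inr y.
Proof. exact: (unsplitK (inr _ y)). Qed.

Lemma weight_join a b (w1 : Omega n a) (w2 : Omega n b) :
  weight e R (join w1 w2) = weight e R w1 * weight e R w2.
Proof.
rewrite /weight big_split_ord /=; congr (_ * _); apply: eq_bigr => k _;
  by rewrite ffunE ?split_l ?split_r.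
Qed.

Lemma EE_split a b (F : Omega n (a + b) -> R) :
  EE F = EE (fun w1 => EE (fun w2 => F (join w1 w2))).
Proof.
rewrite /EE (reindex (fun p : Omega n a * Omega n b => join p.1 p.2)) /=.
  under [RHS]eq_bigr => w1 _ do rewrite big_distrr /=.
  rewrite pair_big /=; apply: eq_big => // -[w1 w2] _ /=.
  by rewrite weight_join mulrA.
exists (fun w => ([ffun x => w (lshift b x)], [ffun y => w (rshift a y)])).
  move=> [w1 w2] _ /=; congr pair; apply/ffunP => x;
    by rewrite !ffunE ?split_l ?split_r.
move=> w _ /=; apply/ffunP => k; rewrite ffunE.
case E: (split k) => [x|y]; rewrite ffunE; by rewrite -(splitK k) E.
Qed.

Lemma EE1 (G : Omega n 1 -> R) : EE G = \sum_c mu c * G [ffun _ => c].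
Proof.
rewrite /EE (reindex (fun c : C => [ffun _ : 'I_1 => c])) /=.
  by apply: eq_bigr => c _; rewrite /weight big_ord1 ffunE.
exists (fun w => w ord0) => [c _|w _]; first by rewrite ffunE.
apply/ffunP => k; rewrite ffunE; congr (w _); apply: val_inj; by case: k => -[].
Qed.

Definition step (S : {set 'I_n}) (c : 'I_n -> bool * 'I_n) : {set 'I_n} :=
  S :|: [set i | (i \notin S) && (c i).1 && ((c i).2 \in S)].

Lemma eq_step S c c' : (forall i, c i = c' i) -> step S c = step S c'.
Proof. by move=> h; apply/setP => i; rewrite !inE h. Qed.

Fixpoint proc T (w : Omega n T) (S : {set 'I_n}) (k : nat) : {set 'I_n} :=
  match k with 0 => S | k.+1 => step (proc w S k) (roundvar w k.+1) end.

Lemma infected_proc istar T (w : Omega n T) k : infected istar w k = proc w [set istar] k.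
Proof. by elim: k => //= k ->. Qed.

Lemma proc_sub T (w : Omega n T) (S : {set 'I_n}) k : S \subset proc w S k.
Proof. elim: k => //= k ih; exact: subset_trans ih (subsetUl _ _). Qed.

Lemma rv_joinl a b (w1 : Omega n a) (w2 : Omega n b) k i : (k < a)%N ->
  roundvar (join w1 w2) k.+1 i = roundvar w1 k.+1 i.
Proof.
move=> ka; rewrite /roundvar.
have ka' : (k < a + b)%N by rewrite ltn_addr.
rewrite (insubT (fun k => k < a + b)%N ka') (insubT (fun k => k < a)%N ka) /=.
have -> : (Sub k ka' : 'I_(a + b)) = lshift b (Sub k ka) by apply: val_inj.
by rewrite ffunE split_l.
Qed.

Lemma rv_joinr a b (w1 : Omega n a) (w2 : Omega n b) k i :
  roundvar (join w1 w2) (a + k).+1 i = roundvar w2 k.+1 i.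
Proof.
rewrite /roundvar; case: (ltnP k b) => kb.
  have kb' : (a + k < a + b)%N by rewrite ltn_add2l.
  rewrite (insubT (fun k => k < a + b)%N kb') (insubT (fun k => k < b)%N kb) /=.
  have -> : (Sub (a + k) kb' : 'I_(a + b)) = rshift a (Sub k kb) by apply: val_inj.
  by rewrite ffunE split_r.
rewrite (@insubF _ (fun k => k < a + b)%N) ?(@insubF _ (fun k => k < b)%N) //.
  by rewrite ltnNge kb.
by rewrite ltn_add2l ltnNge kb.
Qed.

Lemma proc_joinl a b (w1 : Omega n a) (w2 : Omega n b) (S : {set 'I_n}) k : (k <= a)%N ->
  proc (join w1 w2) S k = proc w1 S k.
Proof.
elim: k => //= k ih hk; rewrite ih; last exact: ltnW.
by apply: eq_step => i; apply: rv_joinl.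
Qed.

Lemma proc_join a b (w1 : Omega n a) (w2 : Omega n b) (S : {set 'I_n}) k :
  proc (join w1 w2) S (a + k) = proc w2 (proc w1 S a) k.
Proof.
elim: k => [|k ih]; first by rewrite addn0 proc_joinl.
rewrite addnS /= ih; apply: eq_step => i; exact: rv_joinr.
Qed.


Lemma EE_ext T (F G : Omega n T -> R) : (forall w, F w = G w) -> EE F = EE G.
Proof. by move=> h; apply: eq_bigr => w _; rewrite h. Qed.

Lemma Prob_le1 T (P : pred (Omega n T)) : Prob e R P <= 1.
Proof.
apply: le_trans (mass_le1 T); rewrite /Prob [X in _ <= X](bigID P) /= lerDl.
by apply: sumr_ge0 => w _; apply: weight_ge0.
Qed.

Lemma cross (S : {set 'I_n}) x y : connect (ehon e) x y -> x \in S -> y \notin S ->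
  exists u v, [/\ u \in S, v \notin S & ehon e u v].
Proof.
move=> /connectP [p pth ->] {y}.
elim: p x pth => [|z p ih] x /= pth xS yS; first by rewrite xS in yS.
case/andP: pth => exz pth; case zS: (z \in S); first exact: ih zS yS.
by exists x, z; rewrite zS.
Qed.

Definition q : R := 1 - Ups / (dhon_max e)%:R.

Lemma q_ge0 : 0 <= q.
Proof.
rewrite /q subr_ge0; case: (posnP (dhon_max e)) => [->|hp].
  by rewrite invr0 mulr0 ler01.
rewrite ler_pdivrMr ?ltr0n // mul1r; apply: le_trans Ups_le1 _; by rewrite ler1n.
Qed.

Variable e_sym : symmetric e.
Variable hcon : hon_connected e.

Lemma one_round (S : {set 'I_n}) x0 : x0 \in S -> (#|S| < n)%N ->
  \sum_c mu c * (step S c == S)%:R <= q.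
Proof.
move=> x0S Sn.
have [y yS] : exists y, y \notin S.
  case: (pickP [pred i | i \notin S]) => [y|H]; first by move=> yS; exists y.
  have ST : S = setT by apply/setP => i; move: (H i); rewrite !inE /=; case: (i \in S).
  by move: Sn; rewrite ST cardsT card_ord ltnn.
have [u [v [uS vS uv]]] := cross (hcon x0 y) x0S yS.
have uN : u \in Nhon e v by rewrite inE e_sym; exact: uv.
pose G := fun x : bool * 'I_n => ((~~ (x.1 && (x.2 \in S)))%:R : R).
apply: le_trans (_ : \sum_c mu c * G (c v) <= _).
  apply: ler_sum => c _; rewrite ler_wpM2l ?mu_ge0 //.
  case: eqP => [E|_]; last by rewrite ler0n.
  have h : ~~ ((c v).1 && ((c v).2 \in S)).
    apply/negP => h; move/negP: (vS); apply; rewrite -E inE; apply/orP; right.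
    by rewrite inE vS.
  by rewrite /G h.
have -> : \sum_c mu c * G (c v) =
    \prod_i \sum_x pr1 e R i x * (if i == v then G x else 1).
  rewrite bigA_distr_bigA; apply: eq_bigr => c _.
  rewrite /mu (bigD1 v) //= [RHS](bigD1 v) //= eqxx [LHS]mulrAC; congr (_ * _).
  by apply: eq_bigr => i /negbTE ->; rewrite mulr1.
rewrite (bigD1 v) //= eqxx.
have E1 : forall i, \sum_x pr1 e R i x * 1 = \sum_x pr1 e R i x.
  by move=> i; apply: eq_bigr => x _; rewrite mulr1.
apply: le_trans (_ : \sum_x pr1 e R v x * G x <= _).
  apply: ler_piMr.
    by apply: sumr_ge0 => x _; rewrite mulr_ge0 ?pr1_ge0 ?ler0n.
  apply: prodr_ile1 => i /negbTE ->; rewrite E1.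
  by rewrite sum_pr1_ge0 sum_pr1_le1.
have -> : \sum_x pr1 e R v x * G x =
    \sum_x pr1 e R v x - \sum_x pr1 e R v x * (x.1 && (x.2 \in S))%:R.
  rewrite -sumrB; apply: eq_bigr => x _; rewrite /G.
  by case: (_ && _) => /=; rewrite ?mulr1 ?mulr0 ?subr0 ?subrr.
have hb : Ups / (dhon e v)%:R <= \sum_x pr1 e R v x * (x.1 && (x.2 \in S))%:R.
  rewrite (bigD1 (true, u)) //= uS mulr1 /pr1 /= uN lerDl.
  by apply: sumr_ge0 => x _; rewrite mulr_ge0 ?pr1_ge0 ?ler0n.
have dv : (0 < dhon e v)%N by apply/card_gt0P; exists u.
have dm : (dhon e v <= dhon_max e)%N by exact: (@leq_bigmax _ (fun i : 'I_n => dhon e i) v).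
have hc : Ups / (dhon_max e)%:R <= Ups / (dhon e v)%:R.
  rewrite ler_wpM2l ?Ups_ge0 // lef_pV2 ?posrE ?ltr0n ?ler_nat //.
  exact: leq_trans dv dm.
rewrite /q; apply: lerB; first exact: sum_pr1_le1.
exact: le_trans hc hb.
Qed.

Lemma noinc j (S : {set 'I_n}) x0 : x0 \in S -> (#|S| < n)%N ->
  EE (fun w : Omega n j => (proc w S j == S)%:R) <= q ^+ j.
Proof.
elim: j S => [|j ih] S x0S Sn.
  rewrite expr0; apply: EE_le_c => [|w]; [exact: ler01 | by rewrite /= eqxx].
change (EE (fun w : Omega n (1 + j) => (proc w S (1 + j) == S)%:R) <= q ^+ j.+1).
rewrite EE_split EE1.
apply: le_trans (_ : \sum_c mu c * ((step S c == S)%:R * q ^+ j) <= _).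
  apply: ler_sum => c _; rewrite ler_wpM2l ?mu_ge0 //.
  have E1 : forall w2 : Omega n j, proc (join ([ffun _ => c] : Omega n 1) w2) S (1 + j) = proc w2 (step S c) j.
    move=> w2; rewrite proc_join /=; congr proc; apply: eq_step => i.
    by rewrite /roundvar (insubT (fun k => k < 1)%N (ltn0Sn 0)) /= ffunE.
  rewrite (EE_ext (G := fun w2 => (proc w2 (step S c) j == S)%:R)); last by move=> w2; exact: (congr1 (fun X => (X == S)%:R) (E1 w2)).
  case: eqP => [->|ne]; first by rewrite mul1r; exact: ih.
  rewrite mul0r; apply: EE_le_c => // w2.
  suff -> : (proc w2 (step S c) j == S) = false by [].
  apply/negbTE/eqP => E; apply: ne; have := proc_sub w2 (step S c) j.
  by rewrite E => h; apply/eqP; rewrite eqEsubset h subsetUl.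
under eq_bigr => c _ do rewrite mulrA.
rewrite -mulr_suml exprS ler_wpM2r ?exprn_ge0 ?q_ge0 //.
exact: one_round x0S Sn.
Qed.

Variables (l j : nat) (hl : (l <= n)%N).

Lemma blocks r (S : {set 'I_n}) x0 : x0 \in S -> (l <= #|S| + r)%N ->
  EE (fun w : Omega n (r * j) => (#|proc w S (r * j)| < l)%:R) <= r%:R * q ^+ j.
Proof.
have cge0 : forall r, 0 <= r%:R * q ^+ j by move=> r'; rewrite mulr_ge0 ?ler0n ?exprn_ge0 ?q_ge0.
elim: r S => [|r ih] S x0S hS.
  apply: EE_le_c => // w; rewrite addn0 in hS.
  by rewrite ltnNge (leq_trans hS (subset_leq_card (proc_sub _ _ _))).
case: (ltnP #|S| l) => hSl; last first.
  apply: EE_le_c => // w.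
  by rewrite ltnNge (leq_trans hSl (subset_leq_card (proc_sub _ _ _))).
have E : (r.+1 * j = j + r * j)%N by rewrite mulSn.
rewrite E EE_split.
apply: le_trans (_ : EE (fun w1 : Omega n j => (proc w1 S j == S)%:R + r%:R * q ^+ j) <= _).
  apply: EE_le => w1.
  rewrite (EE_ext (G := fun w2 => (#|proc w2 (proc w1 S j) (r * j)| < l)%:R)); last first.
    by move=> w2; rewrite proc_join.
  case: eqP => [->|ne].
    apply: EE_le_c => [|w2]; first by rewrite addr_ge0 ?ler01.
    apply: le_trans (_ : 1 <= _); first by case: (_ < _)%N.
    by rewrite lerDl.
  rewrite add0r; apply: ih; first exact: (subsetP (proc_sub w1 S j)).
  have : (#|S| < #|proc w1 S j|)%N.
    apply: proper_card; rewrite properEneq proc_sub andbT.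
    by apply/eqP => h; apply: ne; rewrite -h.
  by move: hS; rewrite addnS => ? ?; apply: leq_trans (_ : (#|S| + r).+1 <= _)%N => //; rewrite -addSn leq_add2r.
rewrite EE_add -nat1r mulrDl mul1r; apply: lerD.
  by apply: noinc x0S _; apply: leq_trans hSl hl.
by apply: ler_piMl => //; apply: mass_le1.
Qed.

End Proof.

Theorem mainTheorem15 (R : realFieldType) (n m : nat) (e : rel 'I_(n + m))
  (e_sym : symmetric e) (e_irr : irreflexive e) (istar : 'I_n) :
  hon_connected e ->
  forall l j : nat, (1 <= l)%N -> (l <= n)%N ->
    Prob e R (T := l * j) (tau_gt istar l (l * j))
    <= l%:R * (1 - Upsilon e R / (dhon_max e)%:R) ^+ j.
Proof.
move=> hcon l j hl1 hln.
case: j => [|j].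
  by rewrite expr0 mulr1; apply: le_trans (Prob_le1 R e _) _; rewrite ler1n.
apply: le_trans (_ : EE e (fun w : Omega n (l * j.+1) =>
   (#|proc w [set istar] (l * j.+1)| < l)%:R) <= _).
  rewrite /Prob /EE big_mkcond; apply: ler_sum => w _.
  case: ifP => H; last by rewrite mulr_ge0 ?weight_ge0 ?ler0n.
  move/forallP: H => /(_ ord_max) /=; rewrite infected_proc muln_gt0 hl1 /= => ->.
  by rewrite mulr1.
apply: (@blocks R n m e e_sym hcon l j.+1 hln l [set istar] istar); first by rewrite set11.
by rewrite cards1 add1n.
Qed.
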